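(* Let $X$ be a real separable Hilbert space and $A\in\mathcal L(X)$ monotone, i.e. $\langle Ax,x\rangle\ge0$ for all $x\in X$. Consider the linear equations $Ax=y$ with $y=Ax^\dagger$, $x^\dagger\in X$. (a) These equations are locally well-posed at every $x^\dagger\in X$ if and only if $A$ is continuously invertible, i.e. $A$ is bijective with $A^{-1}\in\mathcal L(X)$; in this case $\|(A+\alpha I)^{-1}\|\le \|A^{-1}\|$ for all $\alpha>0$. (b) These equations are locally ill-posed at every $x^\dagger\in X$ if and only if $\mathcal N(A)\neq\{0\}$ or the range $\mathcal R(A)$ is not closed; in this case $\|(A+\alpha I)^{-1}\|=\frac1\alpha$ for all $\alpha>0$. Exactly one of the cases (a), (b) occurs.
   Context: $\mathcal L(X)$ denotes the Banach space of bounded linear operators $X\to X$ with operator norm. $\mathcal N(A)$ is the null space and $\mathcal R(A)$ the range of $A$. For a monotone $A\in\mathcal L(X)$ and $\alpha>0$, $A+\alpha I$ is boundedly invertible. The equation $Ax=y$ with $y=Ax^\dagger$ is called locally well-posed at $x^\dagger$ if there is $r>0$ such that for every sequence $(x_k)$ in the closed ball of radius $r$ around $x^\dagger$, $\|Ax_k-Ax^\dagger\|\to0$ implies $\|x_k-x^\dagger\|\to0$; otherwise it is locally ill-posed at $x^\dagger$. *)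

(* Defs.v *)
(* real Hilbert spaces are axiomatized here as real inner
   product spaces (carrier with vector-space operations and an inner product),
   together with separate predicates for completeness and separability. *)
From Stdlib Require Import Reals Lra ClassicalEpsilon.
Open Scope R_scope.

Record InnerProductSpace := {
  car :> Type;
  vzero : car;
  vadd : car -> car -> car;
  vopp : car -> car;
  vscal : R -> car -> car;
  inner : car -> car -> R;
  vadd_assoc : forall x y z, vadd x (vadd y z) = vadd (vadd x y) z;
  vadd_comm : forall x y, vadd x y = vadd y x;
  vadd_0 : forall x, vadd x vzero = x;
  vadd_opp : forall x, vadd x (vopp x) = vzero;
  vscal_1 : forall x, vscal 1 x = x;
  vscal_assoc : forall a b x, vscal a (vscal b x) = vscal (a * b) x;
  vscal_distr_v : forall a x y, vscal a (vadd x y) = vadd (vscal a x) (vscal a y);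
  vscal_distr_s : forall a b x, vscal (a + b) x = vadd (vscal a x) (vscal b x);
  inner_sym : forall x y, inner x y = inner y x;
  inner_add_l : forall x y z, inner (vadd x y) z = inner x z + inner y z;
  inner_scal_l : forall a x y, inner (vscal a x) y = a * inner x y;
  inner_pos : forall x, 0 <= inner x x;
  inner_def : forall x, inner x x = 0 -> x = vzero
}.

Arguments vzero {_}.
Arguments vadd {_} _ _.
Arguments vopp {_} _.
Arguments vscal {_} _ _.
Arguments inner {_} _ _.

Section Defs.
Context {X : InnerProductSpace}.

Definition vsub (x y : X) : X := vadd x (vopp y).
Definition norm (x : X) : R := sqrt (inner x x).

Definition converges (u : nat -> X) (l : X) : Prop :=
  forall eps, eps > 0 -> exists N, forall n, (n >= N)%nat -> norm (vsub (u n) l) < eps.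

Definition cauchy (u : nat -> X) : Prop :=
  forall eps, eps > 0 -> exists N, forall n m, (n >= N)%nat -> (m >= N)%nat ->
    norm (vsub (u n) (u m)) < eps.

Definition is_closed (S : X -> Prop) : Prop :=
  forall (u : nat -> X) (l : X), (forall n, S (u n)) -> converges u l -> S l.

Definition linear_op (A : X -> X) : Prop :=
  (forall x y, A (vadd x y) = vadd (A x) (A y)) /\
  (forall a x, A (vscal a x) = vscal a (A x)).

Definition bounded_linear (A : X -> X) : Prop :=
  linear_op A /\ exists C, forall x, norm (A x) <= C * norm x.

(* operator norm: the supremum of ||A x|| over ||x|| <= 1 (chosen classically;
   it is the least upper bound whenever this set is bounded, e.g. for A in L(X)) *)
Definition opnorm_set (A : X -> X) : R -> Prop :=
  fun r => exists x, norm x <= 1 /\ r = norm (A x).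

Definition opnorm (A : X -> X) : R :=
  epsilon (inhabits 0) (fun c => is_lub (opnorm_set A) c).

Definition monotone (A : X -> X) : Prop := forall x, 0 <= inner (A x) x.

Definition shift (A : X -> X) (alpha : R) : X -> X :=
  fun x => vadd (A x) (vscal alpha x).

Definition is_inverse (A B : X -> X) : Prop :=
  (forall x, B (A x) = x) /\ (forall y, A (B y) = y).

Definition cont_invertible (A : X -> X) : Prop :=
  exists B, is_inverse A B /\ bounded_linear B.

Definition null_space_nontrivial (A : X -> X) : Prop :=
  exists x, x <> vzero /\ A x = vzero.

Definition op_range (A : X -> X) : X -> Prop := fun y => exists x, A x = y.

Definition locally_well_posed (A : X -> X) (xd : X) : Prop :=
  exists r, r > 0 /\
    forall xs : nat -> X, (forall k, norm (vsub (xs k) xd) <= r) ->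
      Un_cv (fun k => norm (vsub (A (xs k)) (A xd))) 0 ->
      Un_cv (fun k => norm (vsub (xs k) xd)) 0.

Definition locally_ill_posed (A : X -> X) (xd : X) : Prop :=
  ~ locally_well_posed A xd.

End Defs.

Definition complete (X : InnerProductSpace) : Prop :=
  forall u : nat -> X, cauchy u -> exists l, converges u l.

Definition separable (X : InnerProductSpace) : Prop :=
  exists d : nat -> X, forall (x : X) eps, eps > 0 -> exists n, norm (vsub x (d n)) < eps.

(* Main.v *)
Require Import Defs.
From Stdlib Require Import Reals Lra Lia Psatz ClassicalEpsilon Classical.
Open Scope R_scope.

Section Alg.
Context {X : InnerProductSpace}.
Implicit Types x y z u v : X.

Lemma inner_zero_l z : inner (@vzero X) z = 0.
Proof.
  assert (H := inner_add_l X vzero vzero z). rewrite vadd_0 in H. lra.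
Qed.

Lemma inner_opp_l x z : inner (vopp x) z = - inner x z.
Proof.
  assert (H := inner_add_l X x (vopp x) z). rewrite vadd_opp, inner_zero_l in H. lra.
Qed.

Lemma inner_sub_l x y z : inner (vsub x y) z = inner x z - inner y z.
Proof. unfold vsub. rewrite inner_add_l, inner_opp_l. ring. Qed.

Lemma inner_add_r x y z : inner z (vadd x y) = inner z x + inner z y.
Proof. rewrite !(inner_sym X z). apply inner_add_l. Qed.

Lemma inner_scal_r a x z : inner z (vscal a x) = a * inner z x.
Proof. rewrite !(inner_sym X z). apply inner_scal_l. Qed.

Lemma inner_opp_r x z : inner z (vopp x) = - inner z x.
Proof. rewrite !(inner_sym X z). apply inner_opp_l. Qed.

Lemma inner_sub_r x y z : inner z (vsub x y) = inner z x - inner z y.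
Proof. rewrite !(inner_sym X z). apply inner_sub_l. Qed.

Lemma inner_zero_r z : inner z (@vzero X) = 0.
Proof. rewrite inner_sym. apply inner_zero_l. Qed.

Lemma vec_eq u v : (forall z, inner u z = inner v z) -> u = v.
Proof.
  intros H. assert (E : inner (vsub u v) (vsub u v) = 0).
  { rewrite inner_sub_l, !H. ring. }
  apply inner_def in E. unfold vsub in E.
  rewrite <- (vadd_0 X u), <- (vadd_opp X v), (vadd_comm X v), vadd_assoc, E.
  rewrite vadd_comm. apply vadd_0.
Qed.

Ltac iexp := repeat first [rewrite inner_add_l | rewrite inner_scal_l | rewrite inner_opp_l
  | rewrite inner_sub_l | rewrite inner_zero_l | rewrite inner_add_r | rewrite inner_scal_r
  | rewrite inner_opp_r | rewrite inner_sub_r | rewrite inner_zero_r].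
Ltac iexpH H := repeat first [rewrite inner_add_l in H | rewrite inner_scal_l in H | rewrite inner_opp_l in H
  | rewrite inner_sub_l in H | rewrite inner_zero_l in H | rewrite inner_add_r in H | rewrite inner_scal_r in H
  | rewrite inner_opp_r in H | rewrite inner_sub_r in H | rewrite inner_zero_r in H].

Lemma vscal_0 x : vscal 0 x = vzero.
Proof. apply vec_eq; intro z; iexp; ring. Qed.
Lemma vscal_z a : vscal a (@vzero X) = vzero.
Proof. apply vec_eq; intro z; iexp; ring. Qed.
Lemma vsub_eq0 x y : vsub x y = vzero -> x = y.
Proof. intro H. apply vec_eq; intro z. assert (E:=f_equal (fun w => inner w z) H). simpl in E. rewrite inner_sub_l, inner_zero_l in E. lra. Qed.


Lemma norm_nonneg x : 0 <= norm x.
Proof. unfold norm. apply sqrt_pos. Qed.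
Lemma norm_sq x : norm x * norm x = inner x x.
Proof. unfold norm. apply sqrt_sqrt, inner_pos. Qed.
Lemma norm_zero : @norm X vzero = 0.
Proof. unfold norm. rewrite inner_zero_l. apply sqrt_0. Qed.
Lemma norm_eq0 x : norm x = 0 -> x = vzero.
Proof. intro H. apply inner_def. rewrite <- norm_sq, H. ring. Qed.
Lemma sq_le_norm a b : 0 <= a -> 0 <= b -> a * a <= b * b -> a <= b.
Proof. intros. nra. Qed.
Lemma norm_scal a x : norm (vscal a x) = Rabs a * norm x.
Proof.
  unfold norm. rewrite inner_scal_l, inner_scal_r, <- Rmult_assoc, sqrt_mult_alt.
  - f_equal. apply sqrt_Rsqr_abs.
  - apply Rle_0_sqr.
Qed.

Lemma norm_opp x : norm (vopp x) = norm x.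
Proof. unfold norm. rewrite inner_opp_l, inner_opp_r. f_equal; ring. Qed.
Lemma norm_sub_sym x y : norm (vsub x y) = norm (vsub y x).
Proof. unfold norm. f_equal. iexp. ring. Qed.

Lemma CS_sq x y : inner x y * inner x y <= inner x x * inner y y.
Proof.
  destruct (Req_dec (inner y y) 0) as [H0|H0].
  - apply inner_def in H0. subst y. rewrite !inner_zero_r. nra.
  - assert (Hp := inner_pos X (vsub x (vscal (inner x y / inner y y) y))).
    iexpH Hp. assert (Hb := inner_pos X y). rewrite ?(inner_sym X y x) in Hp.
    set (p := inner x y) in *. set (a := inner x x) in *. set (b := inner y y) in *.
    assert (Hb' : 0 < b) by lra.
    set (t := p / b) in *. assert (Ht : t * b = p) by (unfold t; field; lra).
    rewrite Ht in Hp. assert (0 <= (a - t * p) * b) by nra. nra.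
Qed.

Lemma CS x y : Rabs (inner x y) <= norm x * norm y.
Proof.
  apply sq_le_norm. apply Rabs_pos. apply Rmult_le_pos; apply norm_nonneg.
  rewrite <- Rabs_mult, Rabs_right by nra.
  replace (norm x * norm y * (norm x * norm y)) with ((norm x * norm x) * (norm y * norm y)) by ring.
  rewrite !norm_sq. apply CS_sq.
Qed.

Lemma CS' x y : inner x y <= norm x * norm y.
Proof. eapply Rle_trans. apply Rle_abs. apply CS. Qed.

Lemma norm_tri x y : norm (vadd x y) <= norm x + norm y.
Proof.
  apply sq_le_norm. apply norm_nonneg. assert (H1:=norm_nonneg x). assert (H2:=norm_nonneg y). lra.
  rewrite norm_sq. iexp. rewrite (inner_sym X y x).
  assert (H := CS' x y). rewrite <- (norm_sq x), <- (norm_sq y). nra.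
Qed.

Lemma norm_tri_sub x y z : norm (vsub x z) <= norm (vsub x y) + norm (vsub y z).
Proof.
  replace (vsub x z) with (vadd (vsub x y) (vsub y z)). apply norm_tri.
  apply vec_eq; intro w; iexp; ring.
Qed.

Lemma norm_pos x : x <> vzero -> 0 < norm x.
Proof. intro H. destruct (norm_nonneg x); auto. exfalso. apply H, norm_eq0; auto. Qed.

Lemma norm_small x : (forall eps, eps > 0 -> norm x < eps) -> x = vzero.
Proof.
  intro H. apply norm_eq0. destruct (norm_nonneg x) as [Hp|]; auto.
  specialize (H _ Hp). lra.
Qed.


Section Op.
Variable A : X -> X.
Hypothesis HL : linear_op A.

Lemma lin_add x y : A (vadd x y) = vadd (A x) (A y).
Proof. apply HL. Qed.
Lemma lin_scal a x : A (vscal a x) = vscal a (A x).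
Proof. apply HL. Qed.
Lemma lin_zero : A vzero = vzero.
Proof. rewrite <- (vscal_0 vzero), lin_scal, !vscal_0. reflexivity. Qed.
Lemma lin_opp x : A (vopp x) = vopp (A x).
Proof.
  replace (vopp x) with (vscal (-1) x) by (apply vec_eq; intro; iexp; ring).
  rewrite lin_scal. apply vec_eq; intro; iexp; ring.
Qed.
Lemma lin_sub x y : A (vsub x y) = vsub (A x) (A y).
Proof. unfold vsub. rewrite lin_add, lin_opp. reflexivity. Qed.

End Op.

Definition BB (A : X -> X) := exists c, c > 0 /\ forall x, c * norm x <= norm (A x).

Lemma bl_pos (A : X -> X) : bounded_linear A -> exists C, C > 0 /\ forall x, norm (A x) <= C * norm x.
Proof.
  intros [_ [C HC]]. exists (Rabs C + 1). split. assert (H:=Rabs_pos C). lra.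
  intro x. eapply Rle_trans. apply HC. apply Rmult_le_compat_r. apply norm_nonneg.
  assert (H:=Rle_abs C). lra.
Qed.

Lemma conv_lin (A : X -> X) (s : nat -> X) l : bounded_linear A -> converges s l -> converges (fun n => A (s n)) (A l).
Proof.
  intros HA Hs. destruct (bl_pos A HA) as [C [HC HC']]. intros eps Heps.
  destruct (Hs (eps / C)) as [N HN]. apply Rdiv_lt_0_compat; lra.
  exists N. intros n Hn. rewrite <- lin_sub by apply HA. eapply Rle_lt_trans. apply HC'.
  specialize (HN n Hn). apply Rmult_lt_compat_l with (r := C) in HN; [|lra].
  replace (C * (eps / C)) with eps in HN by (field; lra). lra.
Qed.

Lemma lim_ball (s : nat -> X) l a b k : converges s l -> (forall m, (m >= k)%nat -> norm (vsub (s m) a) <= b) ->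
  norm (vsub l a) <= b.
Proof.
  intros Hs Hb. apply Rnot_lt_le. intro H.
  destruct (Hs (norm (vsub l a) - b)) as [N HN]. lra.
  specialize (HN (max N k) (Nat.le_max_l _ _)). specialize (Hb (max N k) (Nat.le_max_r _ _)).
  assert (T := norm_tri_sub l (s (max N k)) a). rewrite norm_sub_sym in HN. lra.
Qed.

Lemma lim_unique (s : nat -> X) l l' : converges s l -> converges s l' -> l = l'.
Proof.
  intros H1 H2. apply vsub_eq0, norm_small. intros eps Heps.
  destruct (H1 (eps/2)) as [N1 HN1]. lra. destruct (H2 (eps/2)) as [N2 HN2]. lra.
  specialize (HN1 (max N1 N2) (Nat.le_max_l _ _)). specialize (HN2 (max N1 N2) (Nat.le_max_r _ _)).
  assert (T := norm_tri_sub l (s (max N1 N2)) l'). rewrite norm_sub_sym in HN1. lra.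
Qed.


Lemma choice_nat {T : Type} (P : nat -> T -> Prop) : (forall n, exists t, P n t) -> exists f, forall n, P n (f n).
Proof.
  intro H. exists (fun n => proj1_sig (constructive_indefinite_description _ (H n))).
  intro n. exact (proj2_sig (constructive_indefinite_description _ (H n))).
Qed.

Lemma inv_small eps : eps > 0 -> exists N, forall n, (n >= N)%nat -> / (INR n + 1) < eps.
Proof.
  intro He. destruct (archimed_cor1 eps He) as [N [HN HN0]]. exists N. intros n Hn.
  eapply Rle_lt_trans; [|apply HN]. apply Rinv_le_contravar. apply lt_0_INR; lia.
  apply le_INR in Hn. lra.
Qed.

Lemma BB_lwp A xd : linear_op A -> BB A -> locally_well_posed A xd.
Proof.
  intros HL [c [Hc HB]]. exists 1. split. lra. intros xs _ Hcv eps Heps.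
  destruct (Hcv (c * eps)) as [N HN]. nra. exists N. intros n Hn. specialize (HN n Hn).
  unfold Rdist in *. rewrite Rminus_0_r, Rabs_right in * by (apply Rle_ge, norm_nonneg).
  rewrite <- lin_sub in HN by auto. specialize (HB (vsub (xs n) xd)). nra.
Qed.

Lemma lwp_BB A xd : linear_op A -> locally_well_posed A xd -> BB A.
Proof.
  intros HL [r [Hr Hw]]. apply NNPP. intro HnB.
  assert (Hex : forall n : nat, exists z, norm z = r /\ norm (A z) < r * / (INR n + 1)).
  { intro n. assert (Hn1 : 0 < / (INR n + 1)). { apply Rinv_0_lt_compat. assert (H:=pos_INR n). lra. }
    assert (Hn : ~ forall x, / (INR n + 1) * norm x <= norm (A x)).
    { intro H. apply HnB. exists (/ (INR n + 1)). split; auto. }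
    destruct (not_all_ex_not _ _ Hn) as [x Hx].
    assert (Hx' : norm (A x) < / (INR n + 1) * norm x).
    { apply Rnot_le_lt. intro H. apply Hx. lra. }
    assert (Hx0 : x <> vzero). { intro E. subst x. rewrite lin_zero, norm_zero in Hx' by auto. lra. }
    assert (Hnx := norm_pos x Hx0).
    exists (vscal (r / norm x) x). rewrite lin_scal, !norm_scal by auto.
    rewrite Rabs_right. 2:{ apply Rle_ge. apply Rlt_le, Rdiv_lt_0_compat; lra. }
    split. field. lra.
    apply Rmult_lt_compat_l with (r := r / norm x) in Hx'. 2: apply Rdiv_lt_0_compat; lra.
    replace (r / norm x * (/ (INR n + 1) * norm x)) with (r * / (INR n + 1)) in Hx' by (assert (HI:=pos_INR n); field; lra). lra. }
  destruct (choice_nat _ Hex) as [z Hz].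
  specialize (Hw (fun k => vadd xd (z k))).
  assert (Ez : forall k, vsub (vadd xd (z k)) xd = z k) by (intro; apply vec_eq; intro; iexp; ring).
  assert (H1 : forall k, norm (vsub (vadd xd (z k)) xd) <= r) by (intro k; rewrite Ez, (proj1 (Hz k)); lra).
  assert (H2 : Un_cv (fun k => norm (vsub (A (vadd xd (z k))) (A xd))) 0).
  { intros eps Heps. destruct (inv_small (eps / r)) as [N HN]. apply Rdiv_lt_0_compat; lra.
    exists N. intros n Hn. unfold Rdist. rewrite <- lin_sub, Ez, Rminus_0_r, Rabs_right by (auto; apply Rle_ge, norm_nonneg).
    specialize (HN n Hn). destruct (Hz n) as [_ Hz2].
    apply Rmult_lt_compat_l with (r := r) in HN; auto.
    replace (r * (eps / r)) with eps in HN by (field; lra). lra. }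
  specialize (Hw H1 H2 r Hr). destruct Hw as [N HN]. specialize (HN N (le_n N)).
  unfold Rdist in HN. rewrite Ez, (proj1 (Hz N)), Rminus_0_r, Rabs_right in HN; lra.
Qed.


Lemma quad0 p q : (forall t, 0 <= t * p + t * t * q) -> p = 0.
Proof.
  intro H. set (D := 1 + q * q). assert (HD : 0 < D) by (unfold D; nra).
  specialize (H (- p / D)).
  assert (H' : 0 <= (- p / D * p + - p / D * (- p / D) * q) * (D * D)) by (apply Rmult_le_pos; nra).
  replace ((- p / D * p + - p / D * (- p / D) * q) * (D * D)) with (p * p * (q - D)) in H' by (field; lra).
  assert (q - D < 0) by (unfold D; nra). assert (p * p <= 0) by nra. destruct (Rtotal_order p 0) as [h|[h|h]]; nra.
Qed.

Lemma parallelogram u v : norm (vsub u v) * norm (vsub u v) + norm (vadd u v) * norm (vadd u v)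
  = 2 * (norm u * norm u) + 2 * (norm v * norm v).
Proof. rewrite !norm_sq. iexp. rewrite (inner_sym X v u). ring. Qed.

Lemma norm_sq_le a b : 0 <= a -> a <= b -> a * a <= b * b.
Proof. intros. nra. Qed.

Lemma proj_range A : complete X -> bounded_linear A -> is_closed (op_range A) ->
  forall y, exists x, forall z, inner (vsub y (A x)) (A z) = 0.
Proof.
  intros Hc HA Hcl y. assert (HL := proj1 HA).
  set (S := fun r => exists x, r = - norm (vsub y (A x))).
  destruct (completeness S) as [L [HL1 HL2]].
  { exists 0. intros r [x ->]. assert (H:=norm_nonneg (vsub y (A x))). lra. }
  { exists (- norm (vsub y (A vzero))). exists vzero. reflexivity. }
  set (d := - L).
  assert (Hd : forall x, d <= norm (vsub y (A x))).
  { intro x. assert (H := HL1 _ (ex_intro _ x eq_refl)). unfold d. lra. }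
  assert (Hd0 : 0 <= d).
  { unfold d. assert (L <= 0). { apply HL2. intros r [x ->]. assert (H:=norm_nonneg (vsub y (A x))). lra. } lra. }
  assert (Happ : forall eps, eps > 0 -> exists x, norm (vsub y (A x)) < d + eps).
  { intros eps He. apply NNPP. intro Hn.
    assert (L <= L - eps); [|lra].
    apply HL2. intros r [x ->]. assert (~ norm (vsub y (A x)) < d + eps) by (intro; apply Hn; exists x; auto).
    unfold d in *. lra. }
  assert (Hex : forall n : nat, exists x, norm (vsub y (A x)) < d + / (INR n + 1)).
  { intro n. apply Happ. apply Rinv_0_lt_compat. assert (H:=pos_INR n). lra. }
  destruct (choice_nat _ Hex) as [xs Hxs].
  set (e := fun n : nat => / (INR n + 1)).
  assert (He1 : forall n, 0 < e n <= 1).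
  { intro n. unfold e. assert (H:=pos_INR n). split. apply Rinv_0_lt_compat; lra.
    rewrite <- Rinv_1. apply Rinv_le_contravar; lra. }
  assert (Hemono : forall n m, (n <= m)%nat -> e m <= e n).
  { intros n m Hnm. unfold e. apply Rinv_le_contravar. assert (H:=pos_INR n). lra. apply le_INR in Hnm. lra. }
  assert (Hcau : cauchy (fun n => A (xs n))).
  { intros eps Heps. destruct (inv_small (eps * eps / (8 * d + 4))) as [N HN].
    { apply Rdiv_lt_0_compat; nra. }
    exists N. intros n m Hn Hm.
    assert (P := parallelogram (vsub y (A (xs n))) (vsub y (A (xs m)))).
    assert (E1 : vsub (vsub y (A (xs n))) (vsub y (A (xs m))) = vsub (A (xs m)) (A (xs n))) by (apply vec_eq; intro; iexp; ring).
    assert (E2 : vadd (vsub y (A (xs n))) (vsub y (A (xs m))) =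
               vscal 2 (vsub y (A (vadd (vscal (/2) (xs n)) (vscal (/2) (xs m)))))).
    { rewrite lin_add, !lin_scal by auto. apply vec_eq; intro; iexp; field. }
    rewrite E1, E2, norm_scal, Rabs_right in P by lra.
    assert (Hm2 := Hd (vadd (vscal (/2) (xs n)) (vscal (/2) (xs m)))).
    set (w := norm (vsub y (A (vadd (vscal (/ 2) (xs n)) (vscal (/ 2) (xs m)))))) in *.
    assert (Hw2 : d * d <= w * w) by (apply norm_sq_le; auto).
    assert (Ha := Hxs n). assert (Hb := Hxs m). fold (e n) in Ha. fold (e m) in Hb.
    assert (Ha2 : norm (vsub y (A (xs n))) * norm (vsub y (A (xs n))) <= (d + e n) * (d + e n))
      by (apply norm_sq_le; [apply norm_nonneg|lra]).
    assert (Hb2 : norm (vsub y (A (xs m))) * norm (vsub y (A (xs m))) <= (d + e m) * (d + e m))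
      by (apply norm_sq_le; [apply norm_nonneg|lra]).
    assert (HeN := HN N (le_n N)). fold (e N) in HeN.
    assert (Hen := Hemono _ _ Hn). assert (Hem := Hemono _ _ Hm).
    assert (He1n := He1 n). assert (He1m := He1 m). assert (He1N := He1 N).
    assert (Q : norm (vsub (A (xs m)) (A (xs n))) * norm (vsub (A (xs m)) (A (xs n))) <= (8 * d + 4) * e N) by nra.
    assert (Q' : (8 * d + 4) * e N < eps * eps).
    { apply Rmult_lt_compat_l with (r := 8 * d + 4) in HeN; [|lra].
      replace ((8 * d + 4) * (eps * eps / (8 * d + 4))) with (eps * eps) in HeN by (field; lra). lra. }
    rewrite norm_sub_sym. apply Rnot_le_lt. intro Hc'.
    assert (eps * eps <= norm (vsub (A (xs m)) (A (xs n))) * norm (vsub (A (xs m)) (A (xs n)))) by (apply norm_sq_le; lra).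
    lra. }
  destruct (Hc _ Hcau) as [l Hl].
  destruct (Hcl _ l (fun n => ex_intro _ (xs n) eq_refl) Hl) as [xstar Hxstar].
  exists xstar.
  assert (Hmin : norm (vsub y (A xstar)) <= d).
  { apply Rnot_lt_le. intro Hlt. set (delta := norm (vsub y (A xstar)) - d).
    destruct (Hl (delta / 2)) as [N1 HN1]. unfold delta; lra.
    destruct (inv_small (delta / 2)) as [N2 HN2]. unfold delta; lra.
    set (n := max N1 N2). specialize (HN1 n (Nat.le_max_l _ _)). specialize (HN2 n (Nat.le_max_r _ _)).
    assert (T := norm_tri_sub y (A (xs n)) (A xstar)). rewrite Hxstar in T.
    assert (Hn := Hxs n). unfold delta in *. rewrite Hxstar in *. lra. }
  intro z. set (ee := vsub y (A xstar)) in *.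
  apply (Rmult_eq_reg_l (-2)); [|lra]. rewrite Rmult_0_r.
  apply (quad0 _ (inner (A z) (A z))). intro t.
  assert (H1 := Hd (vadd xstar (vscal t z))).
  assert (E : vsub y (A (vadd xstar (vscal t z))) = vsub ee (vscal t (A z))).
  { rewrite lin_add, lin_scal by auto. unfold ee. apply vec_eq; intro; iexp; ring. }
  rewrite E in H1.
  assert (H2 : norm ee * norm ee <= norm (vsub ee (vscal t (A z))) * norm (vsub ee (vscal t (A z))))
    by (apply norm_sq_le; [apply norm_nonneg | lra]).
  rewrite !norm_sq in H2. iexpH H2. rewrite (inner_sym X (A z) ee) in H2. nra.
Qed.


Lemma conv_ext (s t : nat -> X) l : (forall n, s n = t n) -> converges s l -> converges t l.
Proof. intros E H eps He. destruct (H eps He) as [N HN]. exists N. intros n Hn. rewrite <- E. auto. Qed.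

Lemma conv_cauchy (s : nat -> X) l : converges s l -> cauchy s.
Proof.
  intros H eps He. destruct (H (eps/2)) as [N HN]. lra. exists N. intros n m Hn Hm.
  assert (T := norm_tri_sub (s n) l (s m)). assert (HN' := HN m Hm). specialize (HN n Hn).
  rewrite norm_sub_sym in HN'. lra.
Qed.

Lemma BB_closed (A : X -> X) : complete X -> bounded_linear A -> BB A -> is_closed (op_range A).
Proof.
  intros Hc HA [c [Hc0 HB]] s l Hs Hl. assert (HL := proj1 HA).
  destruct (choice_nat (fun n x => A x = s n) Hs) as [xs Hxs].
  assert (Hcx : cauchy xs).
  { intros eps He. destruct (conv_cauchy _ _ Hl (c * eps)) as [N HN]. nra.
    exists N. intros n m Hn Hm. specialize (HN n m Hn Hm). rewrite <- !Hxs, <- lin_sub in HN by auto.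
    specialize (HB (vsub (xs n) (xs m))). nra. }
  destruct (Hc _ Hcx) as [x Hx]. exists x.
  apply (lim_unique (fun n => A (xs n))). apply conv_lin; auto.
  apply (conv_ext s). intro n. auto. auto.
Qed.

Lemma monotone_perp (A : X -> X) w : linear_op A -> monotone A -> (forall z, inner w (A z) = 0) -> A w = vzero.
Proof.
  intros HL Hm Hw. apply inner_def.
  assert (H : forall z, inner (A w) z = 0).
  { intro z. apply (quad0 _ (inner (A z) z)). intro t.
    assert (H := Hm (vadd w (vscal t z))). rewrite lin_add, lin_scal in H by auto. iexpH H.
    rewrite (inner_sym X (A w) w), Hw, (inner_sym X (A z) w), Hw in H. lra. }
  apply H.
Qed.

Lemma surj_of (A : X -> X) : complete X -> bounded_linear A -> monotone A -> ~ null_space_nontrivial A ->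
  is_closed (op_range A) -> forall y, exists x, A x = y.
Proof.
  intros Hc HA Hm Hn Hcl y. assert (HL := proj1 HA).
  destruct (proj_range A Hc HA Hcl y) as [x Hx]. exists x.
  assert (Hw := monotone_perp A _ HL Hm Hx).
  destruct (classic (vsub y (A x) = vzero)) as [E|E].
  - symmetry. apply vsub_eq0. auto.
  - exfalso. apply Hn. exists (vsub y (A x)). auto.
Qed.

Lemma inv_linear (A B : X -> X) : linear_op A -> is_inverse A B -> linear_op B.
Proof.
  intros HL [H1 H2]. split.
  - intros x y. rewrite <- (H1 (vadd (B x) (B y))). f_equal. rewrite lin_add, !H2 by auto. reflexivity.
  - intros a x. rewrite <- (H1 (vscal a (B x))). f_equal. rewrite lin_scal, !H2 by auto. reflexivity.
Qed.

Lemma BB_ci (A : X -> X) : complete X -> bounded_linear A -> monotone A -> BB A -> cont_invertible A.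
Proof.
  intros Hc HA Hm HB. assert (HL := proj1 HA).
  assert (Hinj : ~ null_space_nontrivial A).
  { intros [x [Hx0 Hx]]. destruct HB as [c [Hc0 HB]]. specialize (HB x). rewrite Hx, norm_zero in HB.
    assert (H := norm_pos x Hx0). nra. }
  assert (Hs := surj_of A Hc HA Hm Hinj (BB_closed A Hc HA HB)).
  set (B := fun y => proj1_sig (constructive_indefinite_description _ (Hs y))).
  assert (HAB : forall y, A (B y) = y) by (intro y; exact (proj2_sig (constructive_indefinite_description _ (Hs y)))).
  assert (HBA : forall x, B (A x) = x).
  { intro x. apply vsub_eq0. apply NNPP. intro Hne. apply Hinj. exists (vsub (B (A x)) x). split; auto.
    rewrite lin_sub, HAB by auto. apply vec_eq; intro; iexp; ring. }
  exists B. split. split; auto. split. apply (inv_linear A); auto. split; auto.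
  destruct HB as [c [Hc0 HB]]. exists (/ c). intro y. specialize (HB (B y)). rewrite HAB in HB.
  apply Rmult_le_reg_l with c; auto. rewrite <- Rmult_assoc, Rinv_r, Rmult_1_l; lra.
Qed.

Lemma ci_BB (A : X -> X) : linear_op A -> cont_invertible A -> BB A.
Proof.
  intros HL [B [[H1 H2] [_ [C HC]]]]. exists (/ (Rabs C + 1)). split.
  apply Rinv_0_lt_compat. assert (H:=Rabs_pos C). lra.
  intro x. specialize (HC (A x)). rewrite H1 in HC.
  apply Rmult_le_reg_l with (Rabs C + 1). assert (H:=Rabs_pos C). lra.
  rewrite <- Rmult_assoc, Rinv_r, Rmult_1_l by (assert (H:=Rabs_pos C); lra).
  assert (H:=norm_nonneg (A x)). assert (H':=Rle_abs C). nra.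
Qed.


Lemma choice_gen {D T : Type} (P : D -> T -> Prop) : (forall n, exists t, P n t) -> exists f, forall n, P n (f n).
Proof.
  intro H. exists (fun n => proj1_sig (constructive_indefinite_description _ (H n))).
  intro n. exact (proj2_sig (constructive_indefinite_description _ (H n))).
Qed.

Lemma nat_above r : exists n, r <= INR n.
Proof.
  destruct (archimed_cor1 (/ (Rabs r + 1))) as [N [HN HN0]].
  { apply Rinv_0_lt_compat. assert (H:=Rabs_pos r). lra. }
  exists N. apply Rnot_lt_le. intro H. assert (H1 : INR N <= Rabs r + 1) by (assert (H':=Rle_abs r); lra).
  apply Rinv_le_contravar in H1. lra. apply lt_0_INR. lia.
Qed.

Lemma half_pow_pos k : 0 < (/2) ^ k.
Proof. apply pow_lt. lra. Qed.

Lemma half_pow_small eps : eps > 0 -> exists N, (/2) ^ N < eps.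
Proof.
  intro He. destruct (pow_lt_1_zero (/2)) with (y := eps) as [N HN]. rewrite Rabs_right; lra. auto.
  exists N. specialize (HN N (le_n N)). rewrite Rabs_right in HN. auto. apply Rle_ge, Rlt_le, half_pow_pos.
Qed.

Definition cl (A : X -> X) (n : nat) y := forall eps, eps > 0 -> exists x, norm x <= INR n /\ norm (vsub y (A x)) < eps.

Lemma baire_step A : complete X -> bounded_linear A -> (forall y, exists x, A x = y) ->
  exists n y0 rho, rho > 0 /\ forall y, norm (vsub y y0) < rho -> cl A n y.
Proof.
  intros Hc HA Hs. assert (HL := proj1 HA). apply NNPP. intro Hn.
  assert (H : forall n y0 rho, rho > 0 -> exists y eps, norm (vsub y y0) < rho /\ eps > 0 /\
            forall x, norm x <= INR n -> eps <= norm (vsub y (A x))).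
  { intros n y0 rho Hr. apply NNPP. intro Hne. apply Hn. exists n, y0, rho. split; auto.
    intros y Hy eps He. apply NNPP. intro Hne2. apply Hne. exists y, eps. split; auto. split; auto.
    intros x Hx. apply Rnot_lt_le. intro Hlt. apply Hne2. exists x. auto. }
  assert (Hst : forall p : nat * (X * R), exists q : X * R, snd (snd p) > 0 ->
     snd q > 0 /\ norm (vsub (fst q) (fst (snd p))) < snd (snd p) / 2 /\ snd q <= snd (snd p) / 2 /\
     forall x, norm x <= INR (fst p) -> 2 * snd q <= norm (vsub (fst q) (A x))).
  { intros [n [y0 rho]]. simpl. destruct (Rlt_dec 0 rho) as [Hr|Hr].
    - destruct (H n y0 (rho / 2)) as [y [eps [H1 [H2 H3]]]]. lra.
      exists (y, Rmin (rho / 2) (eps / 2)). simpl. intros _.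
      split. apply Rmin_glb_lt; lra. split; auto. split. apply Rmin_l.
      intros x Hx. specialize (H3 x Hx). assert (H4 := Rmin_r (rho/2) (eps/2)). lra.
    - exists (y0, rho). simpl. lra. }
  destruct (choice_gen _ Hst) as [f Hf].
  set (sq := nat_rect (fun _ => (X * R)%type) (vzero, 1) (fun k p => f (k, p))).
  assert (Hsq : forall k, sq (S k) = f (k, sq k)) by reflexivity.
  assert (Hpos : forall k, snd (sq k) > 0).
  { induction k. simpl. lra. rewrite Hsq. apply (Hf (k, sq k)). auto. }
  assert (Hstep : forall k, norm (vsub (fst (sq (S k))) (fst (sq k))) < snd (sq k) / 2 /\
                            snd (sq (S k)) <= snd (sq k) / 2 /\
                            forall x, norm x <= INR k -> 2 * snd (sq (S k)) <= norm (vsub (fst (sq (S k))) (A x))).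
  { intro k. rewrite Hsq. apply (Hf (k, sq k)). apply Hpos. }
  assert (Hnest : forall k d, norm (vsub (fst (sq (d + k)%nat)) (fst (sq k))) + snd (sq (d + k)%nat) <= snd (sq k)).
  { intros k d. induction d.
    - simpl. replace (vsub (fst (sq k)) (fst (sq k))) with (@vzero X) by (apply vec_eq; intro; iexp; ring).
      rewrite norm_zero. lra.
    - replace (S d + k)%nat with (S (d + k)) by lia.
      destruct (Hstep (d + k)%nat) as [H1 [H2 _]].
      assert (T := norm_tri_sub (fst (sq (S (d + k)))) (fst (sq (d + k)%nat)) (fst (sq k))). lra. }
  assert (Hrho : forall k, snd (sq k) <= (/2) ^ k).
  { induction k. simpl. lra. destruct (Hstep k) as [_ [H2 _]]. rewrite Hsq in H2. simpl. lra. }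
  assert (Hcau : cauchy (fun k => fst (sq k))).
  { intros eps He. destruct (half_pow_small (eps / 2)) as [N HN]. lra. exists N. intros n m Hn1 Hm1.
    assert (E1 := Hnest N (n - N)%nat). assert (E2 := Hnest N (m - N)%nat).
    replace (n - N + N)%nat with n in E1 by lia. replace (m - N + N)%nat with m in E2 by lia.
    assert (T := norm_tri_sub (fst (sq n)) (fst (sq N)) (fst (sq m))).
    rewrite (norm_sub_sym (fst (sq N))) in T. assert (P1 := Hpos n). assert (P2 := Hpos m).
    assert (R1 := Hrho N). lra. }
  destruct (Hc _ Hcau) as [ys Hys].
  assert (Hball : forall k, norm (vsub ys (fst (sq k))) <= snd (sq k)).
  { intro k. apply (lim_ball _ _ _ _ k Hys). intros m Hm. assert (E := Hnest k (m - k)%nat).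
    replace (m - k + k)%nat with m in E by lia. assert (P := Hpos m). lra. }
  destruct (Hs ys) as [xs Hxs]. destruct (nat_above (norm xs)) as [k Hk].
  destruct (Hstep k) as [_ [_ H3]]. specialize (H3 xs Hk). rewrite Hxs in H3.
  specialize (Hball (S k)). rewrite norm_sub_sym in Hball. assert (P := Hpos (S k)). lra.
Qed.


Lemma cl_ball0 A n y0 rho : linear_op A -> (forall y, norm (vsub y y0) < rho -> cl A n y) ->
  forall y, norm y < rho -> cl A n y.
Proof.
  intros HL Hb y Hy eps He.
  destruct (Hb (vadd y0 y)) with (eps := eps) as [x1 [H1 H1']]; auto.
  { replace (vsub (vadd y0 y) y0) with y by (apply vec_eq; intro; iexp; ring). auto. }
  destruct (Hb (vsub y0 y)) with (eps := eps) as [x2 [H2 H2']]; auto.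
  { replace (vsub (vsub y0 y) y0) with (vopp y) by (apply vec_eq; intro; iexp; ring). rewrite norm_opp. auto. }
  exists (vsub (vscal (/2) x1) (vscal (/2) x2)). split.
  - eapply Rle_trans. apply (norm_tri_sub _ vzero).
    replace (vsub (vscal (/ 2) x1) vzero) with (vscal (/2) x1) by (apply vec_eq; intro; iexp; ring).
    replace (vsub vzero (vscal (/ 2) x2)) with (vscal (-/2) x2) by (apply vec_eq; intro; iexp; ring).
    rewrite !norm_scal, Rabs_right, Rabs_left; lra.
  - replace (vsub y (A (vsub (vscal (/ 2) x1) (vscal (/ 2) x2)))) with
      (vsub (vscal (/2) (vsub (vadd y0 y) (A x1))) (vscal (/2) (vsub (vsub y0 y) (A x2))))
      .
    2:{ rewrite (lin_sub A), !(lin_scal A) by auto. apply vec_eq; intro; iexp; field. }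
    eapply Rle_lt_trans. apply (norm_tri_sub _ vzero).
    replace (vsub (vscal (/ 2) (vsub (vadd y0 y) (A x1))) vzero) with (vscal (/ 2) (vsub (vadd y0 y) (A x1)))
      by (apply vec_eq; intro; iexp; ring).
    replace (vsub vzero (vscal (/ 2) (vsub (vsub y0 y) (A x2)))) with (vscal (-/2) (vsub (vsub y0 y) (A x2)))
      by (apply vec_eq; intro; iexp; ring).
    rewrite !norm_scal, Rabs_right, Rabs_left; lra.
Qed.

Lemma approx_step A n rho : linear_op A -> rho > 0 -> (forall y, norm y < rho -> cl A n y) ->
  forall y, exists x, norm x <= 2 * INR n / rho * norm y /\ norm (vsub y (A x)) <= norm y / 2.
Proof.
  intros HL Hr Hb y. destruct (classic (y = vzero)) as [E|E].
  - exists vzero. subst y. rewrite lin_zero by auto. rewrite norm_zero.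
    replace (vsub vzero vzero) with (@vzero X) by (apply vec_eq; intro; iexp; ring). rewrite norm_zero. lra.
  - assert (Hy := norm_pos y E). set (a := rho / (2 * norm y)).
    assert (Ha : 0 < a) by (unfold a; apply Rdiv_lt_0_compat; lra).
    destruct (Hb (vscal a y)) with (eps := rho / 4) as [x' [H1 H2]].
    { rewrite norm_scal, Rabs_right by lra. unfold a. field_simplify; lra. }
    lra.
    exists (vscal (/ a) x'). split.
    + rewrite norm_scal, Rabs_right. 2: apply Rle_ge, Rlt_le, Rinv_0_lt_compat; auto.
      replace (2 * INR n / rho * norm y) with (/ a * INR n) by (unfold a; field; lra).
      apply Rmult_le_compat_l; auto. apply Rlt_le, Rinv_0_lt_compat; auto.
    + replace (vsub y (A (vscal (/ a) x'))) with (vscal (/ a) (vsub (vscal a y) (A x')))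
        by ((rewrite (lin_scal A) by auto); apply vec_eq; intro; iexp; field; lra).
      rewrite norm_scal, Rabs_right. 2: apply Rle_ge, Rlt_le, Rinv_0_lt_compat; auto.
      replace (norm y / 2) with (/ a * (rho / 4)) by (unfold a; field; lra).
      apply Rmult_le_compat_l. apply Rlt_le, Rinv_0_lt_compat; auto. lra.
Qed.


Lemma half_pow_mono n d : (/2) ^ (d + n) <= (/2) ^ n.
Proof.
  induction d. simpl. lra. replace (S d + n)%nat with (S (d + n)) by lia. simpl.
  assert (H := half_pow_pos (d + n)). lra.
Qed.

Lemma omt A : complete X -> bounded_linear A -> (forall y, exists x, A x = y) ->
  (forall x, A x = vzero -> x = vzero) -> BB A.
Proof.
  intros Hc HA Hs Hinj. assert (HL := proj1 HA).
  destruct (baire_step A Hc HA Hs) as [n [y0 [rho [Hr Hb]]]].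
  assert (Hb0 := cl_ball0 A n y0 rho HL Hb).
  set (K := 2 * INR n / rho).
  assert (HK : 0 <= K) by (unfold K; assert (H:=pos_INR n); apply Rmult_le_pos; [lra|apply Rlt_le, Rinv_0_lt_compat; lra]).
  destruct (choice_gen _ (approx_step A n rho HL Hr Hb0)) as [g Hg]. fold K in Hg.
  assert (Hpre : forall y, exists x, A x = y /\ norm x <= 2 * K * norm y).
  { intro y. set (M := K * norm y). assert (HM : 0 <= M) by (unfold M; apply Rmult_le_pos; auto; apply norm_nonneg).
    set (s := nat_rect (fun _ => X) vzero (fun k sk => vadd sk (g (vsub y (A sk))))).
    assert (Hs1 : forall k, s (S k) = vadd (s k) (g (vsub y (A (s k))))) by reflexivity.
    assert (Hrk : forall k, norm (vsub y (A (s k))) <= norm y * (/2) ^ k).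
    { induction k.
      - simpl. rewrite lin_zero by auto. replace (vsub y vzero) with y by (apply vec_eq; intro; iexp; ring). lra.
      - rewrite Hs1. destruct (Hg (vsub y (A (s k)))) as [_ H2].
        replace (vsub y (A (vadd (s k) (g (vsub y (A (s k))))))) with
          (vsub (vsub y (A (s k))) (A (g (vsub y (A (s k)))))) by
          ((rewrite (lin_add A) by auto); apply vec_eq; intro; iexp; ring).
        simpl. lra. }
    assert (Hst : forall k, norm (vsub (s (S k)) (s k)) <= M * (/2) ^ k).
    { intro k. rewrite Hs1. replace (vsub (vadd (s k) (g (vsub y (A (s k))))) (s k)) with (g (vsub y (A (s k))))
        by (apply vec_eq; intro; iexp; ring).
      destruct (Hg (vsub y (A (s k)))) as [H1 _]. specialize (Hrk k). unfold M. nra. }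
    assert (Hnest : forall k d, norm (vsub (s (d + k)%nat) (s k)) <= 2 * M * ((/2) ^ k - (/2) ^ (d + k))).
    { intros k d. induction d.
      - simpl. replace (vsub (s k) (s k)) with (@vzero X) by (apply vec_eq; intro; iexp; ring).
        rewrite norm_zero. lra.
      - replace (S d + k)%nat with (S (d + k)) by lia.
        assert (T := norm_tri_sub (s (S (d + k))) (s (d + k)%nat) (s k)).
        specialize (Hst (d + k)%nat). change ((/2) ^ (S (d + k))) with (/2 * (/2)^(d + k)). set (P := (/2) ^ (d + k)) in *. nra. }
    assert (Hcau : cauchy s).
    { intros eps He. destruct (half_pow_small (eps / (4 * M + 1))) as [N HN].
      apply Rdiv_lt_0_compat; lra. exists N. intros n1 m1 Hn1 Hm1.
      assert (E1 := Hnest N (n1 - N)%nat). assert (E2 := Hnest N (m1 - N)%nat).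
      replace (n1 - N + N)%nat with n1 in E1 by lia. replace (m1 - N + N)%nat with m1 in E2 by lia.
      assert (T := norm_tri_sub (s n1) (s N) (s m1)). rewrite (norm_sub_sym (s N)) in T.
      assert (P1 := half_pow_pos n1). assert (P2 := half_pow_pos m1). assert (PN := half_pow_pos N).
      assert (HN' : (4 * M + 1) * (/2)^N < eps).
      { apply Rmult_lt_compat_l with (r := 4 * M + 1) in HN; [|lra].
        replace ((4 * M + 1) * (eps / (4 * M + 1))) with eps in HN by (field; lra). lra. }
      nra. }
    destruct (Hc _ Hcau) as [sl Hsl]. exists sl. split.
    - apply vsub_eq0. apply norm_small. intros eps He.
      assert (HAc := conv_lin A s sl HA Hsl).
      destruct (HAc (eps / 2)) as [N1 HN1]. lra.
      destruct (half_pow_small (eps / (2 * (norm y + 1)))) as [N2 HN2].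
      { apply Rdiv_lt_0_compat. lra. assert (H:=norm_nonneg y). lra. }
      set (k := max N1 N2). specialize (HN1 k (Nat.le_max_l _ _)).
      assert (Hm := half_pow_mono N2 (k - N2)). replace (k - N2 + N2)%nat with k in Hm by (unfold k; lia).
      specialize (Hrk k). assert (T := norm_tri_sub y (A (s k)) (A sl)).
      assert (Hy := norm_nonneg y). assert (Pk := half_pow_pos k).
      assert (HN2' : 2 * (norm y + 1) * (/2) ^ N2 < eps).
      { apply Rmult_lt_compat_l with (r := 2 * (norm y + 1)) in HN2; [|lra].
        replace (2 * (norm y + 1) * (eps / (2 * (norm y + 1)))) with eps in HN2 by (field; lra). lra. }
      rewrite norm_sub_sym. assert (norm y * (/2)^k <= (norm y + 1) * (/2)^N2) by nra. lra.
    - replace (norm sl) with (norm (vsub sl (s 0%nat))).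
      2:{ simpl. f_equal. apply vec_eq; intro; iexp; ring. }
      apply (lim_ball _ _ _ _ 0 Hsl). intros m _. specialize (Hnest 0%nat m).
      rewrite Nat.add_0_r in Hnest. assert (H := half_pow_pos m). rewrite pow_O in Hnest. unfold M in Hnest. assert (HMy : 0 <= K * norm y) by (apply Rmult_le_pos; auto; apply norm_nonneg). nra. }
  exists (/ (2 * K + 1)). split. apply Rinv_0_lt_compat; lra.
  intro x. destruct (Hpre (A x)) as [x' [H1 H2]].
  assert (E : x' = x).
  { apply vsub_eq0, Hinj. rewrite lin_sub, H1 by auto. apply vec_eq; intro; iexp; ring. }
  subst x'. apply Rmult_le_reg_l with (2 * K + 1). lra.
  rewrite <- Rmult_assoc, Rinv_r, Rmult_1_l by lra. assert (H:=norm_nonneg (A x)). nra.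
Qed.


Lemma opn_lub (T : X -> X) M : 0 <= M -> (forall x, norm (T x) <= M * norm x) ->
  is_lub (opnorm_set T) (opnorm T) /\ opnorm T <= M.
Proof.
  intros HM HT.
  destruct (completeness (opnorm_set T)) as [L HLub].
  { exists M. intros r [x [Hx ->]]. eapply Rle_trans. apply HT. assert (H:=norm_nonneg x). nra. }
  { exists (norm (T vzero)). exists vzero. split; auto. rewrite norm_zero. lra. }
  assert (H : is_lub (opnorm_set T) (opnorm T)).
  { unfold opnorm. apply (epsilon_spec (inhabits 0) (fun c => is_lub (opnorm_set T) c)). exists L. auto. }
  split; auto. apply H. intros r [x [Hx ->]]. eapply Rle_trans. apply HT. assert (H':=norm_nonneg x). nra.
Qed.

Lemma opn_ub (T : X -> X) : bounded_linear T -> forall w, norm (T w) <= opnorm T * norm w.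
Proof.
  intros HT. destruct (bl_pos T HT) as [C [HC HC']].
  destruct (opn_lub T C) as [Hl _]; [lra|auto|]. intro w.
  destruct (classic (w = vzero)) as [E|E].
  - subst w. rewrite lin_zero, norm_zero by apply HT. lra.
  - assert (Hw := norm_pos w E).
    assert (H1 : norm (T (vscal (/ norm w) w)) <= opnorm T).
    { apply Hl. exists (vscal (/ norm w) w). split; auto.
      rewrite norm_scal, Rabs_right. rewrite Rinv_l; lra. apply Rle_ge, Rlt_le, Rinv_0_lt_compat; auto. }
    rewrite lin_scal, norm_scal, Rabs_right in H1 by (apply HT || (apply Rle_ge, Rlt_le, Rinv_0_lt_compat; auto)).
    apply Rmult_le_compat_l with (r := norm w) in H1; [|lra].
    rewrite <- Rmult_assoc, Rinv_r, Rmult_1_l in H1 by lra. lra.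
Qed.

Lemma opn_nonneg (T : X -> X) : bounded_linear T -> 0 <= opnorm T.
Proof.
  intros HT. destruct (bl_pos T HT) as [C [HC HC']].
  destruct (opn_lub T C) as [Hl _]; [lra|auto|]. apply Hl. exists vzero. split.
  rewrite norm_zero; lra. rewrite lin_zero, norm_zero by apply HT. auto.
Qed.

Lemma shift_linear (A : X -> X) a : linear_op A -> linear_op (shift A a).
Proof.
  intros HL. split; intros; unfold shift; [rewrite (lin_add A) by auto | rewrite (lin_scal A) by auto];
  apply vec_eq; intro; iexp; ring.
Qed.

Lemma part_a_ineq (A Ainv : X -> X) a (B : X -> X) : bounded_linear A -> monotone A -> is_inverse A Ainv -> bounded_linear Ainv ->
  a > 0 -> is_inverse (shift A a) B -> opnorm B <= opnorm Ainv.
Proof.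
  intros HA Hm [I1 I2] HAi Ha [J1 J2].
  assert (H0 := opn_nonneg _ HAi).
  apply (opn_lub B (opnorm Ainv) H0). intro z.
  rewrite <- (J2 z) at 2. set (x := B z). unfold shift.
  assert (H1 := opn_ub _ HAi (A x)). rewrite I1 in H1.
  assert (H2 : norm (A x) <= norm (vadd (A x) (vscal a x))).
  { apply sq_le_norm; try apply norm_nonneg. rewrite !norm_sq. iexp.
    assert (H := Hm x). assert (H' := inner_pos X x). rewrite (inner_sym X x (A x)). nra. }
  eapply Rle_trans. apply H1. apply Rmult_le_compat_l; auto.
Qed.

Lemma real_lim q a : 0 <= q -> a > 0 -> (forall d, d > 0 -> 1 <= q * (a + d)) -> 1 <= q * a.
Proof.
  intros Hq Ha H. apply Rnot_lt_le. intro Hlt.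
  specialize (H ((1 - q * a) / (2 * (q + 1)))). 
  assert (Hd : (1 - q * a) / (2 * (q + 1)) > 0) by (apply Rdiv_lt_0_compat; lra).
  specialize (H Hd).
  assert (q * ((1 - q * a) / (2 * (q + 1))) <= (1 - q * a) / 2).
  { replace (q * ((1 - q * a) / (2 * (q + 1)))) with ((1 - q * a) / 2 * (q / (q + 1))) by (field; lra).
    assert (q / (q + 1) <= 1). { apply Rmult_le_reg_r with (q + 1). lra. unfold Rdiv. rewrite Rmult_assoc, Rinv_l; lra. }
    assert (0 <= q / (q+1)) by (apply Rmult_le_pos; [lra | apply Rlt_le, Rinv_0_lt_compat; lra]).
    nra. }
  nra.
Qed.

Lemma part_b_val (A : X -> X) a (B : X -> X) : bounded_linear A -> monotone A -> ~ BB A -> a > 0 ->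
  is_inverse (shift A a) B -> opnorm B = 1 / a.
Proof.
  intros HA Hm HnB Ha [J1 J2]. assert (HL := proj1 HA).
  assert (HBL : linear_op B) by (apply (inv_linear (shift A a)); [apply shift_linear; auto | split; auto]).
  assert (Hup : forall z, norm (B z) <= / a * norm z).
  { intro z. rewrite <- (J2 z) at 2. set (x := B z). unfold shift.
    assert (H := CS' (vadd (A x) (vscal a x)) x). iexpH H. assert (H' := Hm x).
    rewrite <- (norm_sq x) in H. assert (Hx := norm_nonneg x). assert (Hz := norm_nonneg (vadd (A x) (vscal a x))).
    apply Rmult_le_reg_l with a; auto. rewrite <- Rmult_assoc, Rinv_r, Rmult_1_l by lra.
    destruct Hx as [Hx|Hx]. nra. rewrite <- Hx. nra. }
  destruct (opn_lub B (/ a)) as [Hl Hle]; auto. apply Rlt_le, Rinv_0_lt_compat; auto.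
  apply Rle_antisym. unfold Rdiv. lra.
  assert (Hq0 : 0 <= opnorm B). { apply Hl. exists vzero. split. rewrite norm_zero; lra. rewrite lin_zero, norm_zero by auto. auto. }
  assert (Hge : 1 <= opnorm B * a).
  { apply real_lim; auto. intros d Hd.
    assert (Hn : ~ forall x, d * norm x <= norm (A x)) by (intro H; apply HnB; exists d; auto).
    destruct (not_all_ex_not _ _ Hn) as [x Hx]. apply Rnot_le_lt in Hx.
    assert (Hx0 : x <> vzero). { intro E. subst x. rewrite lin_zero, !norm_zero in Hx by auto. lra. }
    assert (Hnx := norm_pos x Hx0).
    set (z := shift A a x).
    assert (Hz : norm z <= (a + d) * norm x).
    { unfold z, shift. eapply Rle_trans. apply norm_tri.
      rewrite norm_scal, Rabs_right by lra. lra. }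
    assert (Hz0 : z <> vzero). { intro E. apply Hx0. rewrite <- (J1 x). fold z. rewrite E.
      apply (lin_zero B HBL). }
    assert (Hnz := norm_pos z Hz0).
    assert (H1 : norm (B (vscal (/ norm z) z)) <= opnorm B).
    { apply Hl. exists (vscal (/ norm z) z). split; auto.
      rewrite norm_scal, Rabs_right. rewrite Rinv_l; lra. apply Rle_ge, Rlt_le, Rinv_0_lt_compat; auto. }
    rewrite (proj2 HBL), norm_scal, Rabs_right in H1. 2: apply Rle_ge, Rlt_le, Rinv_0_lt_compat; auto.
    unfold z in H1. rewrite J1 in H1. fold z in H1.
    apply Rmult_le_compat_l with (r := norm z) in H1; [|lra].
    rewrite <- Rmult_assoc, Rinv_r, Rmult_1_l in H1 by lra. nra. }
  apply Rmult_le_reg_r with a; auto. unfold Rdiv. rewrite Rmult_1_l, Rinv_l; lra.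
Qed.

End Alg.

Theorem proposition1p3 (X : InnerProductSpace)
  (Hcomplete : complete X) (Hsep : separable X)
  (A : X -> X) (HA : bounded_linear A) (Hmon : monotone A) :
  (* (a) *)
  (((forall xd : X, locally_well_posed A xd) <-> cont_invertible A) /\
   (forall Ainv : X -> X, is_inverse A Ainv -> bounded_linear Ainv ->
      forall alpha : R, alpha > 0 ->
      forall B : X -> X, is_inverse (shift A alpha) B ->
        opnorm B <= opnorm Ainv)) /\
  (* (b) *)
  (((forall xd : X, locally_ill_posed A xd) <->
      (null_space_nontrivial A \/ ~ is_closed (op_range A))) /\
   ((null_space_nontrivial A \/ ~ is_closed (op_range A)) ->
      forall alpha : R, alpha > 0 ->
      forall B : X -> X, is_inverse (shift A alpha) B ->
        opnorm B = 1 / alpha)) /\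
  (* exactly one of (a), (b) occurs *)
  (((forall xd : X, locally_well_posed A xd) /\ ~ (forall xd : X, locally_ill_posed A xd)) \/
   (~ (forall xd : X, locally_well_posed A xd) /\ (forall xd : X, locally_ill_posed A xd))).
Proof.
  assert (HL := proj1 HA).
  assert (Hlwp : (forall xd : X, locally_well_posed A xd) <-> BB A).
  { split. intro H. apply (lwp_BB A vzero HL (H vzero)). intros H xd. apply BB_lwp; auto. }
  assert (Hill : (forall xd : X, locally_ill_posed A xd) <-> ~ BB A).
  { split. intros H HB. apply (H vzero). apply BB_lwp; auto.
    intros H xd Hw. apply H. apply (lwp_BB A xd HL Hw). }
  assert (Hnc : (null_space_nontrivial A \/ ~ is_closed (op_range A)) <-> ~ BB A).
  { split.
    - intros [[x [Hx0 Hx]] | Hcl] HB.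
      + destruct HB as [c [Hc HB]]. specialize (HB x). rewrite Hx, norm_zero in HB.
        assert (H := norm_pos x Hx0). nra.
      + apply Hcl. apply BB_closed; auto.
    - intros HnB. apply NNPP. intro H. apply HnB.
      assert (Hn : ~ null_space_nontrivial A) by tauto.
      assert (Hcl : is_closed (op_range A)) by (apply NNPP; tauto).
      apply omt; auto. apply surj_of; auto.
      intros x Hx. apply NNPP. intro Hne. apply Hn. exists x. auto. }
  split; [split|split; [split|]].
  - rewrite Hlwp. split. apply BB_ci; auto. apply ci_BB; auto.
  - intros Ainv H1 H2 a Ha B HB. apply (part_a_ineq A Ainv a B); auto.
  - rewrite Hill, Hnc. tauto.
  - intros H a Ha B HB. apply (part_b_val A a B); auto. apply Hnc; auto.
  - rewrite Hlwp, Hill. destruct (classic (BB A)); tauto.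
Qed.
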